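(* For every $n\geq 3$, the dihedral group $D_n\leq\mathrm{Sym}(n)$ (the group of rotations and reflections of a regular $n$-gon, acting on its $n$ vertices) has the strict EKR property.
   Context: For $G\leq \mathrm{Sym}(n)$: two permutations $\pi,\tau\in G$ intersect if $\pi\tau^{-1}$ has a fixed point in $\{1,\dots,n\}$. A subset of $G$ is intersecting if every pair of its elements intersect. $G$ has the EKR property if every intersecting subset of $G$ has size at most the size of the largest point-stabilizer in $G$. $G$ has the strict EKR property if it has the EKR property and the only intersecting subsets of maximum size in $G$ are the cosets of the point-stabilizers. *)

(* Defs.v *)
From mathcomp Require Import all_boot all_order all_fingroup.
Set Implicit Arguments. Unset Strict Implicit. Unset Printing Implicit Defensive.

Local Open Scope group_scope.

(* Permutation groups are subsets of {perm T} for a finite type T;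
   Sym(n) is {perm 'I_n}, acting on {0,...,n-1}. *)

Definition perm_intersect (T : finType) (p q : {perm T}) : bool :=
  [exists x : T, (p * q^-1) x == x].

Definition intersecting (T : finType) (S : {set {perm T}}) : Prop :=
  forall p q, p \in S -> q \in S -> perm_intersect p q.

Definition stab (T : finType) (G : {set {perm T}}) (x : T) : {set {perm T}} :=
  [set g in G | g x == x].

Definition max_stab (T : finType) (G : {set {perm T}}) : nat :=
  \max_(x : T) #|stab G x|.

Definition EKR (T : finType) (G : {set {perm T}}) : Prop :=
  forall S : {set {perm T}}, S \subset G -> intersecting S -> #|S| <= max_stab G.

Definition stab_coset (T : finType) (G : {set {perm T}}) (S : {set {perm T}}) : Prop :=
  exists x : T, exists2 g, g \in G & (S = g *: stab G x \/ S = stab G x :* g).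

Definition strict_EKR (T : finType) (G : {set {perm T}}) : Prop :=
  EKR G /\
  forall S : {set {perm T}}, S \subset G -> intersecting S -> #|S| = max_stab G ->
    stab_coset G S.

Definition dihedral (n : nat) : {set {perm 'I_n}} :=
  [set p : {perm 'I_n} | [exists k : 'I_n,
     [forall i : 'I_n, val (p i) == (k + i) %% n] ||
     [forall i : 'I_n, val (p i) == (k + (n - i)) %% n]]].

(* Main.v *)
Require Import Defs.
From mathcomp Require Import all_boot all_order all_fingroup.
From mathcomp Require Import all_algebra ring.
Set Implicit Arguments. Unset Strict Implicit. Unset Printing Implicit Defensive.
Import GRing.Theory.
Local Open Scope group_scope.

Section D.
Variable m : nat.
Local Notation T := 'I_(m.+3).

Lemma dihP (p : {perm T}) :
  reflect (exists k : T, (forall i, p i = k + i)%R \/ (forall i, p i = k - i)%R)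
          (p \in dihedral m.+3).
Proof.
rewrite inE; apply: (iffP existsP) => -[k hk]; exists k.
- case/orP: hk => /forallP h; [left|right] => i; apply/val_inj; rewrite (eqP (h i)) //=.
  by rewrite modnDmr.
- apply/orP; case: hk => h; [left|right]; apply/forallP => i; rewrite h //=.
  by rewrite modnDmr.
Qed.

Lemma one_neq_m1 : (1%R : T) != (- 1)%R.
Proof. by rewrite -val_eqE /= !modn_small. Qed.

Lemma not_both (p : {perm T}) a b :
  (forall i, p i = a + i)%R -> (forall i, p i = b - i)%R -> False.
Proof.
move=> ha hb.
have e0 : a = b by have := ha 0%R; rewrite hb addr0 subr0.
have := ha 1%R; rewrite hb e0 => /addrI e.
by move: one_neq_m1; rewrite e eqxx.
Qed.

Definition isrot (p : {perm T}) := [exists k : T, [forall i, p i == (k + i)%R]].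

Lemma le2 (A : {set {perm T}}) : A \subset dihedral m.+3 ->
  (forall p q, p \in A -> q \in A -> exists x, p x = q x) -> #|A| <= 2.
Proof.
move=> sA hA.
have inj : {in A &, injective isrot}.
  move=> p q pA qA.
  move: (hA p q pA qA) => [x ex].
  move: (subsetP sA p pA) (subsetP sA q qA) => /dihP [a ha] /dihP [b hb].
  case: ha => ha; case: hb => hb.
  - move=> _; move: ex; rewrite ha hb => /addIr e; apply/permP => i.
    by rewrite ha hb e.
  - have -> : isrot p by apply/existsP; exists a; apply/forallP => i; rewrite ha.
    move=> /esym /existsP [c /forallP hc].
    by case: (not_both (fun i => eqP (hc i)) hb).
  - have -> : isrot q by apply/existsP; exists b; apply/forallP => i; rewrite hb.
    move=> /existsP [c /forallP hc].
    by case: (not_both (fun i => eqP (hc i)) ha).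
  - move=> _; move: ex; rewrite ha hb => /addIr e; apply/permP => i.
    by rewrite ha hb e.
by rewrite -(card_in_imset inj) -(card_bool) max_card.
Qed.

Lemma invrot (p : {perm T}) b : (forall i, p i = b + i)%R -> forall j, p^-1 j = (j - b)%R.
Proof.
move=> h j; have e : p (j - b)%R = j by rewrite h; ring.
by rewrite -{1}e permK.
Qed.

Lemma invrefl (p : {perm T}) b : (forall i, p i = b - i)%R -> forall j, p^-1 j = (b - j)%R.
Proof.
move=> h j; have e : p (b - j)%R = j by rewrite h; ring.
by rewrite -{1}e permK.
Qed.

Lemma closed (g p : {perm T}) : g \in dihedral m.+3 -> p \in dihedral m.+3 ->
  g * p^-1 \in dihedral m.+3.
Proof.
move=> /dihP [a ha] /dihP [b hb]; apply/dihP.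
case: ha => ha; case: hb => hb.
- exists (a - b)%R; left => i; rewrite permM ha (invrot hb); ring.
- exists (b - a)%R; right => i; rewrite permM ha (invrefl hb); ring.
- exists (a - b)%R; right => i; rewrite permM ha (invrot hb); ring.
- exists (b - a)%R; left => i; rewrite permM ha (invrefl hb); ring.
Qed.

Lemma inter_ex (p q : {perm T}) : perm_intersect p q -> exists x, p x = q x.
Proof.
move=> /existsP [x /eqP h]; exists x.
by rewrite -{2}h permM permKV.
Qed.

Lemma max_stab2 : max_stab (dihedral m.+3) = 2.
Proof.
apply/eqP; rewrite eqn_leq; apply/andP; split.
  apply/bigmax_leqP => x _; apply: le2; first by apply/subsetP => g; rewrite inE => /andP [].
  by move=> p q; rewrite !inE => /andP [_ /eqP hp] /andP [_ /eqP hq]; exists x; rewrite hp hq.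
pose r := perm (@oppr_inj T).
have r1 : r != 1%g.
  apply/eqP => /permP /(_ 1%R); rewrite permE perm1 => e.
  by move: one_neq_m1; rewrite e eqxx.
apply: leq_trans (leq_bigmax (0%R : T)).
have := cards2 r 1%g; rewrite r1 => <-; apply: subset_leq_card; apply/subsetP => g.
move=> hg; have : (g == r) || (g == 1%g) by rewrite !inE in hg.
rewrite /stab in_set => /orP [] /eqP ->; apply/andP; split; try done.
- apply/dihP; exists 0%R; right => i; rewrite permE; ring.
- by rewrite permE oppr0.
- apply/dihP; exists 0%R; left => i; rewrite perm1; ring.
- by rewrite perm1.
Qed.

End D.

Theorem proposition6 (n : nat) : 3 <= n -> strict_EKR (dihedral n).
Proof.
case: n => [|[|[|m]]] // _.
have E : EKR (dihedral m.+3).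
  move=> S sS iS; rewrite max_stab2; apply: le2 => // p q pS qS.
  exact: inter_ex (iS p q pS qS).
split => // S sS iS; rewrite max_stab2 => /eqP /cards2P [p [q [pq eS]]].
have pS : p \in S by rewrite eS !inE eqxx.
have qS : q \in S by rewrite eS !inE eqxx orbT.
have [x ex] := inter_ex (iS p q pS qS).
exists x; exists p; first by apply: (subsetP sS); rewrite eS !inE eqxx.
right; apply/eqP; rewrite eqEcard; apply/andP; split.
  apply/subsetP => g gS'; rewrite mem_rcoset /stab in_set.
  have gS : (g == p) || (g == q) by rewrite eS !inE in gS'.
  have gD : g \in dihedral m.+3 by apply: (subsetP sS).
  have pD : p \in dihedral m.+3 by apply: (subsetP sS).
  rewrite closed //= permM.
  by case/orP: gS => /eqP ->; [rewrite permK | rewrite -ex permK].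
rewrite card_rcoset eS cards2 pq; apply: le2.
  by apply/subsetP => g; rewrite inE => /andP [].
by move=> g h; rewrite !inE => /andP [_ /eqP hg] /andP [_ /eqP hh]; exists x; rewrite hg hh.
Qed.
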